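(* Let $n\ge 2$ and let $m,p,k$ be integers with $1\le m\le p\le n$, $1\le k\le n$ and $m<n$. The number of $\alpha\in\mathcal{ODCT}_n$ with $h(\alpha)=p$, $w^+(\alpha)=k$ and $f(\alpha)=m$ is $$F(n;p,k,m)=\begin{cases}\binom{n-m-1}{p-m}, & p=k,\\ 0, & p\ne k.\end{cases}$$
   Context: $X_n=\{1,2,\dots,n\}$ with its usual order; maps are written on the right ($x\alpha$). A map $\alpha:X_n\to X_n$ is order-preserving if $x\le y$ implies $x\alpha\le y\alpha$, order-decreasing if $x\alpha\le x$ for all $x$, and a contraction if $|x\alpha-y\alpha|\le|x-y|$ for all $x,y$. $\mathcal{ODCT}_n$ is the set of all maps $X_n\to X_n$ (defined on all of $X_n$) that are order-preserving, order-decreasing contractions. Height $h(\alpha)=|\mathrm{Im}\,\alpha|$; right waist $w^+(\alpha)=\max(\mathrm{Im}\,\alpha)$; fix $f(\alpha)=|\{x\in X_n:x\alpha=x\}|$. Binomial coefficients $\binom{a}{b}$ with $b>a\ge0$ are $0$. *)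

(* Defs.v *)
From mathcomp Require Import all_boot.
Set Implicit Arguments. Unset Strict Implicit. Unset Printing Implicit Defensive.

(* X_n = {1,...,n} is modelled by 'I_n, the element i : 'I_n standing for i+1.
   Maps X_n -> X_n are finite functions {ffun 'I_n -> 'I_n}. *)

Definition absdist (a b : nat) : nat := (a - b) + (b - a).

Definition order_preserving n (al : {ffun 'I_n -> 'I_n}) : bool :=
  [forall x : 'I_n, forall y : 'I_n, (x <= y) ==> (al x <= al y)].

Definition order_decreasing n (al : {ffun 'I_n -> 'I_n}) : bool :=
  [forall x : 'I_n, al x <= x].

Definition contraction n (al : {ffun 'I_n -> 'I_n}) : bool :=
  [forall x : 'I_n, forall y : 'I_n, absdist (al x) (al y) <= absdist x y].

Definition ODCT n (al : {ffun 'I_n -> 'I_n}) : bool :=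
  [&& order_preserving al, order_decreasing al & contraction al].

Definition height n (al : {ffun 'I_n -> 'I_n}) : nat := #|[set al x | x : 'I_n]|.

(* right waist w+(al) = max Im al, as an element of {1..n} (hence the +1) *)
Definition rwaist n (al : {ffun 'I_n -> 'I_n}) : nat := \max_(x : 'I_n) (val (al x)).+1.

Definition fixcount n (al : {ffun 'I_n -> 'I_n}) : nat := #|[set x : 'I_n | al x == x]|.

(* Main.v *)
Require Import Defs.
From mathcomp Require Import all_boot zify.
Set Implicit Arguments. Unset Strict Implicit. Unset Printing Implicit Defensive.

Definition Sc (c : nat -> bool) (x : nat) : nat := \sum_(j < x) c j.

Lemma Sc0 c : Sc c 0 = 0. Proof. by rewrite /Sc big_ord0. Qed.
Lemma ScS c x : Sc c x.+1 = Sc c x + c x. Proof. by rewrite /Sc big_ord_recr. Qed.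
Lemma Sc_le c x : Sc c x <= x.
Proof. elim: x => [|x IH]; rewrite ?Sc0 ?ScS //; case: (c x) => /=; lia. Qed.
Lemma Sc_mono c x d : Sc c x <= Sc c (x + d) <= Sc c x + d.
Proof. elim: d => [|d IH]; first by rewrite !addn0 leqnn.
rewrite addnS ScS; case: (c _) => /=; lia. Qed.
Lemma Sc_le2 c x y : x <= y -> Sc c x <= Sc c y /\ Sc c y <= Sc c x + (y - x).
Proof. move=> h; have := Sc_mono c x (y - x); rewrite subnKC //; lia. Qed.
Lemma Sc_eqP c x : Sc c x = x <-> (forall j, j < x -> c j).
Proof.
elim: x => [|x IH]; first by rewrite Sc0; split => // _ j.
rewrite ScS; have := Sc_le c x; split.
- move=> h j; rewrite ltnS leq_eqVlt => /orP[/eqP->|hj].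
  + by case: (c x) h => //=; lia.
  + have : Sc c x = x by case: (c x) h => /=; lia.
    by move/IH; apply.
- move=> h; have -> : Sc c x = x by apply/IH => j hj; apply: h; lia.
  by rewrite h // addn1.
Qed.
Lemma Sc_ivt c x y : y <= Sc c x -> exists2 z, z <= x & Sc c z = y.
Proof.
elim: x y => [|x IH] y; first by rewrite Sc0 leqn0 => /eqP->; exists 0; rewrite ?Sc0.
rewrite ScS => hy; case: (leqP y (Sc c x)) => h.
- by have [z hz e] := IH _ h; exists z => //; lia.
- by exists x.+1; rewrite ?ScS //; case: (c x) hy h => /=; lia.
Qed.

Lemma card_lt K v : v <= K -> #|[set y : 'I_K | y < v]| = v.
Proof.
move=> hv. have -> : [set y : 'I_K | y < v] = [set widen_ord hv y | y : 'I_v].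
  apply/setP=> y; rewrite inE; apply/idP/imsetP => [hy|[z _ ->]] /=.
  - by exists (Ordinal hy) => //; apply: val_inj.
  - exact: ltn_ord.
by rewrite card_imset ?card_ord //; by move=> a b /(congr1 val) /= h; apply: val_inj.
Qed.
Section Gen.
Variable n' : nat.
Local Notation n := n'.+1.

Definition F (al : {ffun 'I_n -> 'I_n}) (x : nat) : nat := al (inord x).
Definition gen (c : nat -> bool) : {ffun 'I_n -> 'I_n} :=
  [ffun x : 'I_n => inord (Sc c x)].
Definition cal (al : {ffun 'I_n -> 'I_n}) (j : nat) : bool := F al j.+1 != F al j.

Lemma gen_val c (x : 'I_n) : nat_of_ord (gen c x) = Sc c x.
Proof. rewrite ffunE inordK //; exact: leq_ltn_trans (Sc_le c x) (ltn_ord x). Qed.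
Lemma F_gen c x : x <= n' -> F (gen c) x = Sc c x.
Proof. by move=> hx; rewrite /F gen_val inordK. Qed.

Lemma gen_ODCT c : ODCT (gen c).
Proof.
apply/and3P; split.
- apply/forallP => x; apply/forallP => y; apply/implyP => hxy.
  by rewrite !gen_val; case: (Sc_le2 c hxy).
- by apply/forallP => x; rewrite gen_val Sc_le.
- apply/forallP => x; apply/forallP => y; rewrite /absdist !gen_val.
  case: (leqP x y) => h.
  + by have := Sc_le2 c h; lia.
  + by have := Sc_le2 c (ltnW h); lia.
Qed.

Lemma ODCT_gen al : ODCT al -> al = gen (cal al).
Proof.
case/and3P => /forallP op /forallP dec /forallP con.
have F0 : F al 0 = 0 by have := dec (inord 0); rewrite /F inordK //; lia.
have Fm : forall x y, x <= y <= n' -> F al x <= F al y.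
  move=> x y /andP[h1 h2]; rewrite /F.
  move: (op (inord x)) => /forallP/(_ (inord y))/implyP; apply.
  rewrite !inordK; lia.
have Fs : forall x, x < n' -> F al x.+1 <= (F al x).+1.
  move=> x h; have /forallP/(_ (inord x)) := con (inord x.+1).
  by rewrite /absdist !inordK //; rewrite /F; lia.
have key : forall x, x <= n' -> F al x = Sc (cal al) x.
  elim=> [|x IH] h; first by rewrite F0 Sc0.
  rewrite ScS -IH; last lia.
  have := Fm x x.+1; have := Fs x; rewrite /cal.
  case: eqP => e; first by rewrite e addn0.
  move=> a b; have := a ltac:(lia); have := b ltac:(lia); lia.
apply/ffunP => x; apply: val_inj; rewrite /= gen_val -key; last by have := ltn_ord x.
by rewrite /F inord_val.
Qed.

Lemma height_gen c : height (gen c) = (Sc c n').+1.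
Proof.
rewrite /height.
have -> : [set gen c x | x : 'I_n] = [set y : 'I_n | y < (Sc c n').+1].
  apply/setP => y; rewrite inE; apply/imsetP/idP.
  - case=> x _ ->; rewrite gen_val ltnS.
    by case: (Sc_le2 c (_ : x <= n')) => //; have := ltn_ord x.
  - rewrite ltnS => /Sc_ivt [z hz e]; exists (inord z) => //.
    by apply: val_inj; rewrite /= gen_val inordK.
by rewrite card_lt // ltnS Sc_le.
Qed.

Lemma rwaist_gen c : rwaist (gen c) = (Sc c n').+1.
Proof.
rewrite /rwaist; apply/eqP; rewrite eqn_leq; apply/andP; split.
- apply/bigmax_leqP => x _ /=; rewrite gen_val ltnS.
  by case: (Sc_le2 c (_ : x <= n')) => //; have := ltn_ord x.
- have := leq_bigmax (F := fun x : 'I_n => (val (gen c x)).+1) ord_max.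
  by rewrite /= gen_val.
Qed.

Lemma fix_gen c (x : 'I_n) : (gen c x == x) = (Sc c x == x).
Proof. by rewrite -val_eqE /= gen_val. Qed.

Lemma gen_ext c1 c2 : (forall j, j < n' -> c1 j = c2 j) -> gen c1 = gen c2.
Proof.
move=> h; apply/ffunP => x; rewrite !ffunE; congr inord; rewrite /Sc.
apply: eq_bigr => j _; rewrite h //; have := ltn_ord x; have := ltn_ord j; lia.
Qed.
End Gen.

Definition cA m N (A : {set 'I_N}) (j : nat) : bool :=
  if j < m.-1 then true else if j == m.-1 then false else (j - m \in map val (enum A)).

Lemma sum_cA n' m (A : {set 'I_(n'-m)}) : 1 <= m -> m <= n' -> Sc (cA m A) n' = m.-1 + #|A|.
Proof.
move=> m1 mn; rewrite /Sc -(big_mkord xpredT (fun j => (cA m A j : nat))).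
rewrite (@big_cat_nat _ _ _ m.-1 0 n') /=; [|lia|lia].
rewrite (@big_ltn _ _ _ m.-1 n'); last lia.
rewrite prednK //.
rewrite (eq_big_nat _ _ (F2 := fun _ => 1)); last by move=> i /andP[_ h]; rewrite /cA h.
have -> : cA m A m.-1 = false by rewrite /cA ltnn eqxx.
rewrite sum_nat_const_nat subn0 muln1 add0n.
rewrite (eq_big_nat _ _ (F2 := fun i => (i - m \in map val (enum A)) : nat)); last first.
  by move=> i /andP[h _]; rewrite /cA ifF ?ifF //; lia.
rewrite -{2}(add0n m) big_addn big_mkord; congr (_ + _).
rewrite -sum1_card [RHS]big_mkcond /=; apply: eq_bigr => i _.
by rewrite addnK mem_map ?mem_enum //; exact: val_inj.
Qed.

Lemma fix_cA n' m (A : {set 'I_(n'-m)}) : 1 <= m -> m <= n' -> fixcount (gen n' (cA m A)) = m.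
Proof.
move=> m1 mn; rewrite /fixcount.
have -> : [set x : 'I_n'.+1 | gen n' (cA m A) x == x] = [set x : 'I_n'.+1 | x < m].
  apply/setP => x; rewrite !inE fix_gen.
  case: (ltnP x m) => h.
  - apply/eqP/Sc_eqP => j hj; rewrite /cA ifT //; lia.
  - apply/negbTE/negP => /eqP/Sc_eqP/(_ m.-1 ltac:(lia)).
    by rewrite /cA ltnn eqxx.
by rewrite card_lt //; lia.
Qed.

Theorem proposition4p1 (n m p k : nat) :
  2 <= n -> 1 <= m -> m <= p -> p <= n -> 1 <= k -> k <= n -> m < n ->
  #|[set al : {ffun 'I_n -> 'I_n} |
      [&& ODCT al, height al == p, rwaist al == k & fixcount al == m]]|
  = if p == k then 'C(n - m - 1, p - m) else 0.
Proof.
move=> n2 m1 mp pn k1 kn mn.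
case: n n2 pn kn mn => [//|n'] _ pn kn mn.
case: (eqVneq p k) => [<-|hpk]; last first.
  apply/eqP; rewrite cards_eq0; apply/eqP/setP => al; rewrite !inE.
  apply/negbTE/negP => /and4P[od /eqP hh /eqP hr _].
  have e := ODCT_gen od; have h1 := height_gen n' (cal al); have h2 := rwaist_gen n' (cal al).
  rewrite -e in h1 h2; move/eqP: hpk; lia.
set D := [set A : {set 'I_(n'-m)} | #|A| == p - m].
have -> : [set al : {ffun 'I_n'.+1 -> 'I_n'.+1} |
      [&& ODCT al, height al == p, rwaist al == p & fixcount al == m]]
      = [set gen n' (cA m A) | A in D].
  apply/setP => al; rewrite inE; apply/idP/imsetP.
  - case/and4P => od /eqP hh _ /eqP hf.
    set c := cal al. have e := ODCT_gen od.
    have hfix : forall y : 'I_n'.+1, (y \in [set z : 'I_n'.+1 | al z == z]) = (Sc c y == y).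
      by move=> y; rewrite inE {1}e fix_gen.
    have down : forall y z, y <= z -> Sc c z == z -> Sc c y == y.
      move=> y z hyz /eqP/Sc_eqP hz; apply/eqP/Sc_eqP => j hj; apply: hz; lia.
    rewrite /fixcount in hf.
    have fixc : forall x, x <= n' -> (Sc c x == x) = (x < m).
      move=> x hx; case: (ltnP x m) => hxm.
      + apply/negP => /negP hn.
        have : #|[set z : 'I_n'.+1 | al z == z]| <= x.
          rewrite -(card_lt (K := n'.+1) (v := x)); last lia.
          apply: subset_leq_card; apply/subsetP => z; rewrite hfix !inE => hz.
          rewrite ltnNge; apply/negP => hxz; move: hn; rewrite (down x z hxz hz).
          by [].
        rewrite hf; lia.
      + apply/negbTE/negP => hx2.
        have : x.+1 <= #|[set z : 'I_n'.+1 | al z == z]|.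
          rewrite -(card_lt (K := n'.+1) (v := x.+1)); last lia.
          apply: subset_leq_card; apply/subsetP => z; rewrite inE ltnS => hz.
          by rewrite hfix (down z x hz hx2).
        rewrite hf; lia.
    have cm1 : forall j, j < m.-1 -> c j.
      move=> j hj; have := fixc j.+1 ltac:(lia).
      have -> : j.+1 < m by lia.
      by move/eqP/Sc_eqP; apply.
    have cm : c m.-1 = false.
      have h1 := fixc m.-1 ltac:(lia); have h2 := fixc m ltac:(lia).
      have hm : m.-1 < m by lia.
      rewrite ltnn in h2; rewrite hm in h1.
      move/eqP: h1; move: h2; rewrite -{1 2}(prednK m1) ScS => h2 h1.
      by rewrite h1 in h2; case: (c m.-1) h2 => //=; rewrite addn1 eqxx.
    set A := [set i : 'I_(n'-m) | c (i + m)].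
    have eg : gen n' (cA m A) = al.
      rewrite [RHS]e -/c; apply: gen_ext => j hj; rewrite /cA.
      case: ifP => h; first by rewrite cm1.
      case: eqP => h'; first by rewrite h' cm.
      have hj' : j - m < n' - m by lia.
      have -> : j - m = val (Ordinal hj') by [].
      rewrite mem_map ?mem_enum ?inE /=; last exact: val_inj.
      by rewrite subnK //; lia.
    exists A; last by rewrite eg.
    rewrite inE; have := height_gen n' (cA m A); rewrite eg sum_cA //; lia.
  - case=> A; rewrite inE => /eqP hA ->.
    rewrite gen_ODCT height_gen rwaist_gen sum_cA ?fix_cA //; try lia.
rewrite card_in_imset; first by rewrite card_draws card_ord; congr 'C(_, _); lia.
move=> A B _ _ e; apply/setP => i.
have key : forall C : {set 'I_(n'-m)},
    (i \in C) = (F (gen n' (cA m C)) (i + m).+1 != F (gen n' (cA m C)) (i + m)).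
  move=> C; have := ltn_ord i => hi.
  rewrite !F_gen; [|lia|lia]; rewrite ScS.
  have -> : cA m C (i + m) = (i \in C).
    rewrite /cA ifF; last lia. rewrite ifF; last lia.
    by rewrite addnK mem_map ?mem_enum //; exact: val_inj.
  by case: (i \in C) => /=; lia.
by rewrite !key e.
Qed.
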